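(* Let $n \geq 2$ be an integer. Then $R_n^* = S_n T_n$. In particular $$\det R_n^* = M^*(n) = \sum_{k=1}^n \mu^*(k).$$
   Context: For positive integers $i,j$, $i \parallel j$ means $i \mid j$ and $\gcd(i,j/i)=1$. The unitary Möbius function is $\mu^*(m)=(-1)^{\omega(m)}$, with $\omega(m)$ the number of distinct prime factors of $m$. For real $x>0$ and a positive integer $m$, $M^*(x,m) := \sum_{k \leq x,\ \gcd(k,m)=1}\mu^*(k)$ (sum over positive integers $k$), and $M^*(x) := M^*(x,1)$. $R_n^*=(\rho_{ij})_{1\le i,j\le n}$ is the $n\times n$ matrix with $\rho_{ij}=1$ if $i \parallel j$ or $j=1$, and $\rho_{ij}=0$ otherwise. $S_n=(s_{ij})$ is the $n\times n$ matrix with $s_{ij}=1$ if $i\parallel j$ and $0$ otherwise. $T_n=(t_{ij})$ is the $n\times n$ matrix with $t_{i1}=M^*(n/i,i)$ for all $i$, $t_{ii}=1$ for $i\ge 2$, and $t_{ij}=0$ otherwise. *)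

(* Defs.v *)
From mathcomp Require Import all_boot all_order all_algebra.
Set Implicit Arguments. Unset Strict Implicit. Unset Printing Implicit Defensive.
Import GRing.Theory Num.Theory.
Local Open Scope ring_scope.

Definition udvd (i j : nat) : bool := (i %| j)%N && coprime i (j %/ i).

Definition mu_star (m : nat) : int := (-1) ^+ size (primes m).

(* M*(x, m) for x = N a natural number (the sum over k <= x only depends on
   floor x): sum over 1 <= k <= N with gcd(k,m)=1 of mu*(k). *)
Definition Mstar (N m : nat) : int :=
  \sum_(1 <= k < N.+1 | coprime k m) mu_star k.

(* Matrices are indexed by 'I_n; index i : 'I_n stands for the integer i+1. *)
Definition Rstar (n : nat) : 'M[int]_n :=
  \matrix_(i < n, j < n)
    (if udvd i.+1 j.+1 || (j.+1 == 1)%N then 1 else 0).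

Definition Smat (n : nat) : 'M[int]_n :=
  \matrix_(i < n, j < n) (if udvd i.+1 j.+1 then 1 else 0).

(* t_{i1} = M*(n/i, i); t_{ii} = 1 for i >= 2; 0 otherwise.
   M*(n/i, i) = Mstar (n %/ i) i since k <= n/i iff k <= floor(n/i). *)
Definition Tmat (n : nat) : 'M[int]_n :=
  \matrix_(i < n, j < n)
    (if (j.+1 == 1)%N then Mstar (n %/ i.+1) i.+1
     else if i == j then 1 else 0).

(* Main.v *)
Require Import Defs.
From mathcomp Require Import all_boot all_order all_algebra zify.
Set Implicit Arguments. Unset Strict Implicit. Unset Printing Implicit Defensive.
Import GRing.Theory Num.Theory.
Local Open Scope ring_scope.

Lemma sum_invol (B : nat) (P : pred nat) (F : nat -> int) (g : nat -> nat) :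
  (forall x, P x -> (x < B)%N) ->
  (forall x, P x -> P (g x)) -> (forall x, P x -> g (g x) = x) ->
  (forall x, P x -> F (g x) = - F x) ->
  \sum_(0 <= x < B | P x) F x = 0.
Proof.
move=> PB Pg gg Fg.
set s := [seq x <- index_iota 0 B | P x].
have Hs : \sum_(0 <= x < B | P x) F x = \sum_(x <- s) F x by rewrite big_filter.
have us : uniq s by rewrite filter_uniq // iota_uniq.
have ms x : (x \in s) = P x.
  rewrite mem_filter mem_index_iota /=; case Px: (P x) => //=; exact: PB.
have pe : perm_eq s (map g s).
  apply: uniq_perm => //.
    rewrite map_inj_in_uniq // => x y; rewrite !ms => Px Py e.
    by rewrite -(gg x Px) e gg.
  move=> y; apply/idP/mapP.
    rewrite ms => Py; exists (g y); last by rewrite gg.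
    by rewrite ms Pg.
  by case=> x; rewrite ms => Px ->; rewrite ms Pg.
have H2 : \sum_(x <- s) F x = - \sum_(x <- s) F x.
  rewrite {1}(perm_big _ pe) big_map -sumrN.
  apply: eq_big_seq => x xs; have Px : P x by rewrite -ms. by rewrite Fg.
rewrite Hs; move: H2; set S := \sum_(x <- s) F x => H2; lia.
Qed.

Lemma mu_mulp p a r : prime p -> (0 < a)%N -> (0 < r)%N -> ~~ (p %| r)%N ->
  mu_star (p ^ a * r) = - mu_star r.
Proof.
move=> pp a0 r0 npr; rewrite /mu_star.
have pe : perm_eq (primes (p ^ a * r)) (p :: primes r).
  apply: uniq_perm; first exact: primes_uniq.
    by rewrite /= primes_uniq andbT mem_primes pp r0 /= npr.
  move=> x; rewrite primesM ?expn_gt0 ?(prime_gt0 pp) // primesX // primes_prime //.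
  by rewrite inE.
by rewrite (perm_size pe) /= exprS mulN1r.
Qed.

Section Q.
Variables (p a M N : nat).
Hypotheses (pp : prime p) (a0 : (0 < a)%N) (NqM : N = (p ^ a * M)%N) (npM : ~~ (p %| M)%N).
Local Notation q := (p ^ a)%N.

Lemma q_gt0 : (0 < q)%N. Proof. by rewrite expn_gt0 prime_gt0. Qed.
Lemma M_gt0 : (0 < M)%N. Proof. by case: M npM => //; rewrite dvdn0. Qed.
Lemma N_gt0 : (0 < N)%N. Proof. by rewrite NqM muln_gt0 q_gt0 M_gt0. Qed.
Lemma p_dvd_q : (p %| q)%N. Proof. by rewrite -{1}(expn1 p) dvdn_exp2l. Qed.
Lemma cop_q x : ~~ (p %| x)%N -> coprime q x.
Proof. by move=> h; apply: coprimeXl; rewrite prime_coprime. Qed.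

Lemma pairQ K L : (K * L = N)%N -> coprime K L -> ~~ (p %| K)%N ->
  exists L', L = (q * L')%N /\ ~~ (p %| L')%N.
Proof.
move=> KL cKL npK.
have qL : (q %| L)%N.
  rewrite -(Gauss_dvdr _ (cop_q npK)) KL NqM; exact: dvdn_mulr.
exists (L %/ q)%N; split; first by rewrite mulnC divnK.
apply/negP => pL'.
have : M = (K * (L %/ q))%N.
  apply/eqP; rewrite -(eqn_pmul2l q_gt0) -NqM -KL mulnCA.
  by rewrite [(q * (L %/ q))%N]mulnC divnK.
by move=> eM; move: npM; rewrite eM (dvdn_mull _ pL').
Qed.

Lemma U1 K : ~~ (p %| K)%N -> udvd K N ->
  [/\ udvd (K * q) N, (N %/ K = q * (N %/ (K * q)))%N & ~~ (p %| N %/ (K * q))%N].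
Proof.
move=> npK /andP[KN cK].
have KL : (K * (N %/ K) = N)%N by rewrite mulnC divnK.
have [L' [eL npL']] := pairQ KL cK npK.
have K0 : (0 < K)%N by case: K npK {KL cK eL} KN => //; rewrite dvdn0.
have eN : N = (K * q * L')%N by rewrite -mulnA -eL KL.
have eL' : (N %/ (K * q) = L')%N by rewrite eN mulKn // muln_gt0 K0 q_gt0.
rewrite eL' eL; split => //.
rewrite /udvd eL' {1}eN dvdn_mulr //= coprimeMl (cop_q npL') andbT.
by apply: coprime_dvdr cK; rewrite eL dvdn_mull.
Qed.

Lemma U2 K : (p %| K)%N -> udvd K N ->
  exists K', [/\ K = (K' * q)%N, ~~ (p %| K')%N & udvd K' N].
Proof.
move=> pK /andP[KN cK].
have LK : ((N %/ K) * K = N)%N by rewrite divnK.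
have npL : ~~ (p %| N %/ K)%N.
  by rewrite -prime_coprime //; apply: coprime_dvdl cK.
have cLK : coprime (N %/ K) K by rewrite coprime_sym.
have [K' [eK npK']] := pairQ LK cLK npL.
exists K'; split => //; first by rewrite mulnC.
have eN : N = (K' * (q * (N %/ K)))%N by rewrite mulnA -[(K' * q)%N]mulnC -eK mulnC LK.
have K'0 : (0 < K')%N by case: K' npK' {eK eN} => //; rewrite dvdn0.
rewrite /udvd {1}eN dvdn_mulr //= {1}eN mulKn // coprimeMr.
rewrite coprime_sym (cop_q npK') /=.
have hK : (K' %| K)%N by rewrite eK dvdn_mull.
exact: coprime_dvdl hK cK.
Qed.
End Q.

Lemma udvd_mulq I K q : coprime I q -> udvd I (K * q) = udvd I K.
Proof.
move=> cIq; rewrite /udvd Gauss_dvdl //.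
case: (boolP (I %| K)%N) => //= h.
by rewrite -divn_mulAC // coprimeMr cIq andbT.
Qed.

Lemma udvd_trans I K N : (0 < I)%N -> udvd I K -> udvd K N -> udvd I N.
Proof.
move=> I0 /andP[IK cI] /andP[KN cK].
rewrite /udvd (dvdn_trans IK KN) /=.
have e : (N %/ I = K %/ I * (N %/ K))%N.
  have hK := divnK IK; have hN := divnK KN.
  move: hK hN; set x := (K %/ I)%N; set y := (N %/ K)%N => hK hN.
  by rewrite -hN -hK mulnA mulnK // mulnC.
rewrite e coprimeMr cI /=.
exact: coprime_dvdl IK cK.
Qed.

Lemma udvd_div_gt0 X N : (0 < N)%N -> udvd X N -> (0 < N %/ X)%N.
Proof.
move=> N0 /andP[XN _]; rewrite divn_gt0 ?(dvdn_leq N0 XN) //.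
exact: dvdn_gt0 N0 XN.
Qed.

Lemma mu1 : mu_star 1 = 1. Proof. by []. Qed.

Lemma core (I N B : nat) : (0 < I)%N -> (0 < N)%N -> (N < B)%N ->
  \sum_(0 <= K < B | udvd I K && udvd K N) mu_star (N %/ K) = (N == I)%:R.
Proof.
move=> I0 N0 NB.
case: (eqVneq N I) => [eNI|nNI].
  subst N.
  rewrite (eq_bigl (fun K => K == I)); last first.
    move=> K; apply/andP/eqP => [[/andP[h1 _] /andP[h2 _]]|->].
      by apply/eqP; rewrite eqn_dvd h1 h2.
    by rewrite /udvd dvdnn divnn I0 coprimen1.
  by rewrite big_nat1_eq /= NB divnn I0 mu1.
case: (boolP (udvd I N)) => hIN; last first.
  rewrite big_pred0 // => K; apply/negP => /andP[h1 h2].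
  by move: hIN; rewrite (udvd_trans I0 h1 h2).
set R := (N %/ I)%N.
have eN : N = (I * R)%N by rewrite mulnC divnK //; case/andP: hIN.
have R1 : (1 < R)%N.
  case: R eN => [|[|r]] //; first by rewrite muln0 => e; move: N0; rewrite e.
  by rewrite muln1 => e; move: nNI; rewrite e eqxx.
set p := pdiv R.
have pp : prime p := pdiv_prime R1.
have pR : (p %| R)%N := pdiv_dvd R.
have npI : ~~ (p %| I)%N.
  apply/negP => pI; case/andP: hIN => _ cIR.
  have : coprime p R by apply: coprime_dvdl pI cIR.
  by rewrite prime_coprime // pR.
have pN : (p %| N)%N by rewrite eN dvdn_mull.
set a := logn p N.
have a0 : (0 < a)%N by rewrite logn_gt0 mem_primes pp N0.
set M := (N`_p^')%N.
have NqM : N = (p ^ a * M)%N by rewrite -p_part partnC.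
have npM : ~~ (p %| M)%N.
  apply/negP => pM; have := coprime_partC p N N.
  rewrite p_part -/a => c.
  have : coprime p M.
    apply: coprime_dvdl c; exact: (p_dvd_q p a0).
  by rewrite prime_coprime // pM.
have cIq : coprime I (p ^ a) by rewrite coprime_sym (cop_q a pp).
set q := (p ^ a)%N.
have q0 : (0 < q)%N := q_gt0 a pp.
apply: (@sum_invol _ _ _ (fun K => if p %| K then K %/ q else K * q)%N).
- move=> K /andP[_ /andP[KN _]]; exact: leq_ltn_trans (dvdn_leq N0 KN) NB.
- move=> K /andP[h1 h2]; case pK: (p %| K)%N.
    have [K' [eK npK' uK']] := U2 pp NqM npM pK h2.
    by rewrite eK mulnK // uK' andbT -(udvd_mulq _ cIq) -eK.
  have [uKq _ _] := U1 pp NqM npM (negbT pK) h2.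
  by rewrite uKq andbT udvd_mulq.
- move=> K /andP[h1 h2]; case pK: (p %| K)%N.
    have [K' [eK npK' uK']] := U2 pp NqM npM pK h2.
    by rewrite eK mulnK // (negbTE npK') -eK.
  by rewrite dvdn_mull ?(p_dvd_q p a0) // mulnK.
- move=> K /andP[h1 h2]; case pK: (p %| K)%N.
    have [K' [eK npK' uK']] := U2 pp NqM npM pK h2.
    have [_ e npr] := U1 pp NqM npM npK' uK'.
    rewrite eK mulnK // e mu_mulp //.
    by apply: udvd_div_gt0 N0 _; rewrite -eK.
  have [uKq e npr] := U1 pp NqM npM (negbT pK) h2.
  rewrite e mu_mulp // ?opprK //.
  exact: udvd_div_gt0 N0 uKq.
Qed.

Lemma regroup K n : (0 < K)%N ->
  \sum_(1 <= l < (n %/ K)%N.+1 | coprime l K) mu_star l =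
  \sum_(1 <= N < n.+1 | (K %| N)%N && coprime (N %/ K)%N K) mu_star (N %/ K)%N.
Proof.
move=> K0; elim: n => [|n IH]; first by rewrite div0n !big_geq.
rewrite [RHS]big_mkcond big_nat_recr //= -big_mkcond -IH divnS //.
case: (boolP (K %| n.+1)%N) => h /=.
  have e : (n.+1 %/ K = (n %/ K).+1)%N by rewrite divnS // h.
  rewrite add1n big_mkcond big_nat_recr //= -big_mkcond. by [].
by rewrite add0n addr0.
Qed.

Lemma col0 n (i : 'I_n) :
  \sum_(k < n) (if udvd i.+1 k.+1 then 1 else 0) * Mstar (n %/ k.+1) k.+1 = 1.
Proof.
set I := i.+1.
have I0 : (0 < I)%N by [].
have In : (I <= n)%N by exact: ltn_ord.
transitivity (\sum_(k < n) \sum_(1 <= N < n.+1)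
   (if udvd I k.+1 && udvd k.+1 N then mu_star (N %/ k.+1) else 0)).
  apply: eq_bigr => k _; rewrite /Mstar regroup //.
  case: ifP => h; last by rewrite mul0r big1 // => N _; rewrite andFb.
  rewrite mul1r big_mkcond; apply: eq_bigr => N _.
  by rewrite /udvd coprime_sym.
rewrite exchange_big /=.
transitivity (\sum_(1 <= N < n.+1) (N == I)%:R : int).
  rewrite !big_nat; apply: eq_bigr => N /andP[N0 Nn].
  rewrite -(core I0 N0 Nn) [RHS]big_mkcond big_nat_recl //= big_mkord.
  rewrite [X in _ = X + _](_ : _ = 0) ?add0r //.
  by rewrite /udvd dvd0n (gtn_eqF N0) andbF.
rewrite (eq_bigr (fun N => if N == I then 1 else 0)); last by move=> N _; case: (N == I).
by rewrite -big_mkcond big_nat1_eq I0 ltnS In.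
Qed.

Lemma prod_eq (n : nat) : (2 <= n)%N -> Rstar n = Smat n *m Tmat n.
Proof.
move=> hn; apply/matrixP => i j; rewrite !mxE.
case: j => [[|j] hj] /=.
  rewrite orbT -(col0 i); apply: eq_bigr => k _; rewrite !mxE /=.
  by [].
rewrite orbF (bigD1 (Ordinal hj)) //= big1 ?addr0.
  by rewrite !mxE /= eqxx mulr1.
move=> k /negbTE nk; rewrite !mxE /=.
by rewrite nk mulr0.
Qed.

Lemma detS n : \det (Smat n) = 1.
Proof.
rewrite -det_tr det_trig.
  by rewrite big1 // => i _; rewrite !mxE /udvd dvdnn divnn coprimen1.
apply/is_trig_mxP => i j ij; rewrite !mxE /udvd.
case: ifP => // /andP[h _]; move: (dvdn_leq (ltn0Sn _) h); rewrite ltnS.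
by rewrite leqNgt ij.
Qed.

Lemma detT n : \det (Tmat n.+1) = Mstar n.+1 1.
Proof.
rewrite det_trig.
  rewrite big_ord_recl big1 ?mulr1; first by rewrite !mxE /= divn1.
  by move=> i _; rewrite !mxE /= eqxx.
apply/is_trig_mxP => i j ij; rewrite !mxE.
have j0 : (j != 0 :> nat)%N by rewrite -lt0n (leq_ltn_trans _ ij).
rewrite eqSS (negbTE j0); case: eqP => // e; by move: ij; rewrite e ltnn.
Qed.

Theorem theorem2 (n : nat) (hn : (2 <= n)%N) :
  Rstar n = Smat n *m Tmat n /\
  \det (Rstar n) = Mstar n 1 /\
  Mstar n 1 = \sum_(1 <= k < n.+1) mu_star k.
Proof.
split; first exact: prod_eq.
split.
  case: n hn => // n hn.
  by rewrite prod_eq // det_mulmx detS mul1r detT.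
by rewrite /Mstar; apply: eq_bigl => k; rewrite coprimen1.
Qed.
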